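(* If the languages recognized by two DFAs $\mathcal{A}_1$ and $\mathcal{A}_2$ over $A$ are not PT-separable, then there exists a factorization pattern $(\vec u,\vec B)$ such that both $\mathcal{A}_1$ and $\mathcal{A}_2$ admit a $(\vec u,\vec B)$-path.
   Context: Piecewise testable (PT) languages over $A$ are finite Boolean combinations of languages $A^*a_1A^*\cdots A^*a_nA^*$ ($a_i\in A$); $L_1,L_2$ are PT-separable if some PT language $L$ satisfies $L_1\subseteq L$, $L\cap L_2=\varnothing$. For states $p,q$ and $B\subseteq A$: $p\xrightarrow{\subseteq B}q$ denotes a path (possibly empty) with all labels in $B$; $p\xrightarrow{=B}q$ such a path in which every letter of $B$ occurs. A factorization pattern is $(\vec u,\vec B)$ with $\vec u=(u_0,\dots,u_p)\in(A^* )^{p+1}$, $\vec B=(B_1,\dots,B_p)$ nonempty subsets of $A$. A $(\vec u,\vec B)$-path is a path from an initial to a final state of the form $s_0\xrightarrow{u_0}p_1\xrightarrow{\subseteq B_1}q_1\xrightarrow{=B_1}q_1\xrightarrow{\subseteq B_1}r_1\xrightarrow{u_1}\cdots\xrightarrow{u_{p-1}}p_p\xrightarrow{\subseteq B_p}q_p\xrightarrow{=B_p}q_p\xrightarrow{\subseteq B_p}r_p\xrightarrow{u_p}f$. *)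

(* Defs.v *)
From mathcomp Require Import all_boot.
Set Implicit Arguments. Unset Strict Implicit. Unset Printing Implicit Defensive.

Record dfa (A : finType) := DFA {
  state : finType;
  init : state;
  delta : state -> A -> state;
  final : pred state }.

Section Defs.
Variable A : finType.

Definition run (D : dfa A) (p : state D) (w : seq A) : state D :=
  foldl (@delta A D) p w.

Definition lang (D : dfa A) : pred (seq A) :=
  fun w => final (run (init D) w).

(* Piecewise testable languages: finite Boolean combinations of
   A^* a_1 A^* ... A^* a_n A^*  =  { w | [:: a_1; ...; a_n] is a subword of w } *)
Inductive pt_expr :=
| PTatom of seq A
| PTtrue
| PTnot of pt_expr
| PTand of pt_expr & pt_expr
| PTor of pt_expr & pt_expr.

Fixpoint pt_sem (e : pt_expr) (w : seq A) : bool :=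
  match e with
  | PTatom v => subseq v w
  | PTtrue => true
  | PTnot e1 => ~~ pt_sem e1 w
  | PTand e1 e2 => pt_sem e1 w && pt_sem e2 w
  | PTor e1 e2 => pt_sem e1 w || pt_sem e2 w
  end.

Definition PT_language (L : pred (seq A)) : Prop :=
  exists e, forall w, L w = pt_sem e w.

Definition PT_separable (L1 L2 : pred (seq A)) : Prop :=
  exists L, PT_language L /\ (forall w, L1 w -> L w) /\ (forall w, L w -> ~~ L2 w).

Definition path_sub (D : dfa A) (B : {set A}) (p q : state D) : Prop :=
  exists w : seq A, all (fun a => a \in B) w /\ run p w = q.

Definition path_eq (D : dfa A) (B : {set A}) (p q : state D) : Prop :=
  exists w : seq A, all (fun a => a \in B) w /\ (forall b, b \in B -> b \in w)
                    /\ run p w = q.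

(* from state s, a path of the form
   s -u_0-> p_1 -(⊆B_1)-> q_1 -(=B_1)-> q_1 -(⊆B_1)-> r_1 -u_1-> ... -u_p-> f, f final *)
Fixpoint pattern_path_from (D : dfa A) (s : state D)
    (us : seq (seq A)) (Bs : seq {set A}) : Prop :=
  match us, Bs with
  | [:: u], [::] => final (run s u)
  | u :: us', B :: Bs' =>
      exists p q r : state D,
        run s u = p /\ path_sub B p q /\ path_eq B q q /\ path_sub B q r /\
        pattern_path_from r us' Bs'
  | _, _ => False
  end.

Definition factorization_pattern (us : seq (seq A)) (Bs : seq {set A}) : Prop :=
  size us = (size Bs).+1 /\ all (fun B : {set A} => B != set0) Bs.

Definition admits_pattern_path (D : dfa A) (us : seq (seq A)) (Bs : seq {set A}) : Prop :=
  pattern_path_from (init D) us Bs.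

End Defs.

(* Main.v *)
From Stdlib Require Import Classical ClassicalEpsilon.
Require Import Defs.
From mathcomp Require Import all_boot zify.
Set Implicit Arguments. Unset Strict Implicit. Unset Printing Implicit Defensive.


Section Words.
Variable A : finType.
Implicit Types (s t u v w : seq A) (x y e : A) (B : {set A}).

Lemma subseq_split s1 s2 t : subseq (s1 ++ s2) t ->
  exists i, subseq s1 (take i t) /\ subseq s2 (drop i t).
Proof.
elim: t s1 => [|y t IH] s1.
  rewrite subseq0 => /eqP; case: s1 => //= ->; by exists 0.
case: s1 => [|x s1] H; first by exists 0; rewrite take0 drop0 sub0seq.
rewrite /= in H; case: eqP H => [<-|_] H.
  have [i [H1 H2]] := IH _ H; exists i.+1 => /=; by rewrite eqxx.
have [i [H1 H2]] := IH (x :: s1) H; exists i.+1 => /=; split=> //.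
exact: subseq_trans H1 (subseq_cons _ _).
Qed.

Lemma subseq_join s1 s2 t i : subseq s1 (take i t) -> subseq s2 (drop i t) ->
  subseq (s1 ++ s2) t.
Proof. by move=> H1 H2; rewrite -(cat_take_drop i t) cat_subseq. Qed.

Lemma subseq_take_le i j t : i <= j -> subseq (take i t) (take j t).
Proof. by move=> le; rewrite -(take_takel t le) take_subseq. Qed.

Lemma subseq_drop_le i j t : i <= j -> subseq (drop j t) (drop i t).
Proof. by move=> le; rewrite -(subnK le) -drop_drop drop_subseq. Qed.

Lemma subseq_rcons2 u e t y : subseq (rcons u e) (rcons t y) ->
  ~~ subseq (rcons u e) t -> y = e /\ subseq u t.
Proof.
rewrite -subseq_rev !rev_rcons /= -[subseq (rcons u e) t]subseq_rev rev_rcons.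
case: eqP => [->|_] H1 H2; last by rewrite H1 in H2.
by split=> //; rewrite -subseq_rev.
Qed.

Lemma subseq_cons_inv v y t : subseq v (y :: t) -> ~~ subseq v t ->
  exists v', v = y :: v' /\ subseq v' t.
Proof.
case: v => [|x v'] /=; first by rewrite sub0seq.
case: eqP => [->|_] H1 H2; last by rewrite H1 in H2.
by exists v'.
Qed.

Lemma subseq_last_take u e n s : subseq (rcons u e) (take n.+1 s) ->
  ~~ subseq (rcons u e) (take n s) ->
  n < size s /\ nth e s n = e /\ subseq u (take n s).
Proof.
case: (ltnP n (size s)) => ns.
  rewrite (take_nth e ns) => H1 H2.
  by have [-> ?] := subseq_rcons2 H1 H2.
by rewrite !take_oversize // ?(leq_trans ns) // => ->.
Qed.

Definition prof K s t := forall v, size v <= K -> subseq v s = subseq v t.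

Lemma prof_refl K s : prof K s s. Proof. by []. Qed.
Lemma prof_sym K s t : prof K s t -> prof K t s.
Proof. by move=> H v hv; rewrite H. Qed.
Lemma prof_trans K s t u : prof K s t -> prof K t u -> prof K s u.
Proof. by move=> H1 H2 v hv; rewrite H1 // H2. Qed.
Lemma prof_le K K' s t : K' <= K -> prof K s t -> prof K' s t.
Proof. by move=> le H v hv; apply: H; apply: leq_trans le. Qed.
Lemma prof_rev K s t : prof K s t -> prof K (rev s) (rev t).
Proof.
move=> H v hv; rewrite -[v]revK !subseq_rev; apply: H; by rewrite size_rev.
Qed.

Section Cut.
Variables (K : nat) (P : seq A).

Definition good s j := forall w, size w <= K -> subseq w (take j s) -> subseq w P.
Definition maxgood s j := [/\ j <= size s, good s j &
   forall j', j' <= size s -> good s j' -> j' <= j].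

Lemma good_mono s j j' : good s j -> j' <= j -> good s j'.
Proof.
move=> H le w hw hs; apply: H hw _; exact: subseq_trans hs (subseq_take_le _ le).
Qed.

Lemma maxgood_ex s : exists j, maxgood s j.
Proof.
have g0 : good s 0 by move=> w _; rewrite take0 subseq0 => /eqP ->; exact: sub0seq.
suff: forall n, n <= size s -> exists j, [/\ j <= n, good s j &
   forall j', j' <= n -> good s j' -> j' <= j].
  move=> /(_ _ (leqnn _)) [j [h1 h2 h3]]; by exists j.
elim=> [_|n IH lt]; first by exists 0; split=> // j' /[swap] _; rewrite leqn0 => /eqP ->.
have [gn|gn] := classic (good s n.+1).
  by exists n.+1; split.
have [j [h1 h2 h3]] := IH (ltnW lt); exists j; split => //; first exact: leqW.
move=> j' hj' gj'; apply: h3 => //; rewrite leq_eqVlt in hj'.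
case/orP: hj' => [/eqP E|//]; by rewrite E in gj'.
Qed.

Definition Phi s v := exists u e, [/\ size u < K, ~~ subseq (rcons u e) P &
  (subseq (rcons u e ++ v) s \/ exists v', v = e :: v' /\ subseq (u ++ v) s)].

Lemma cut_char s j v : maxgood s j -> v != [::] ->
  subseq v (drop j s) <-> Phi s v.
Proof.
case=> js gj mj vn; split.
  move=> hv.
  have jlt : j < size s.
    rewrite ltnNge; apply/negP => le; move: hv; rewrite drop_oversize //.
    by rewrite subseq0 (negbTE vn).
  have ng : ~ good s j.+1 by move=> g; have := mj _ jlt g; rewrite ltnn.
  have [w hw] := not_all_ex_not _ _ ng.
  have [hw1 hw2 hw3] : [/\ size w <= K, subseq w (take j.+1 s) & ~~ subseq w P].
    apply: NNPP => hn; apply: hw => h1 h2; apply: NNPP => h3; apply: hn; split=> //.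
    exact/negP.
  have nw : ~~ subseq w (take j s).
    by apply/negP => h; rewrite (gj _ hw1 h) in hw3.
  clear hw ng.
  move: hw1 hw2 hw3 nw; case/lastP: w => [|u e] hw1 hw2 hw3 nw.
    by rewrite sub0seq in nw.
  have [_ [he hu]] := subseq_last_take hw2 nw.
  exists u, e; split => //; first by rewrite size_rcons in hw1.
  rewrite (drop_nth e jlt) he in hv.
  case hv2: (subseq v (drop j.+1 s)).
    by left; apply: (subseq_join hw2 hv2).
  have [v' [-> hv']] := subseq_cons_inv hv (negbT hv2).
  right; exists v'; split => //.
  apply: (subseq_join hu); by rewrite (drop_nth e jlt) he /= eqxx.
case=> u [e [hu hP H]].
have notj : forall i, subseq (rcons u e) (take i s) -> j < i.
  move=> i hi; rewrite ltnNge; apply/negP => le.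
  have := gj _ _ (subseq_trans hi (subseq_take_le _ le)).
  by rewrite size_rcons (negbTE hP) => /(_ hu).
case: H => [H|[v' [-> H]]].
  have [i [h1 h2]] := subseq_split H.
  exact: subseq_trans h2 (subseq_drop_le _ (ltnW (notj _ h1))).
rewrite -cat_rcons in H.
have [i [h1 h2]] := subseq_split H.
have ex : exists n, subseq (rcons u e) (take n s) by exists i.
case: (ex_minnP ex) => i0 hi0 mi0.
have j0 := notj _ hi0.
move: hi0 mi0 j0; case: i0 => [|i1] hi0 mi0 j0; first by rewrite ltn0 in j0.
have ni1 : ~~ subseq (rcons u e) (take i1 s).
  by apply/negP => h; have := mi0 _ h; rewrite ltnn.
have [i1s [he _]] := subseq_last_take hi0 ni1.
apply: subseq_trans (subseq_drop_le _ (j0 : j <= i1)).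
rewrite (drop_nth e i1s) he /= eqxx.
apply: subseq_trans h2 (subseq_drop_le _ _); exact: mi0.
Qed.

Lemma Phi_prof s s' v : prof (K + size v) s s' -> (Phi s v <-> Phi s' v).
Proof.
move=> H; split; case=> u [e [h1 h2 h3]]; exists u, e; split => //.
- case: h3 => [h|[v' [ev h]]]; [left|right; exists v'; split=> //].
  + by rewrite -H // size_cat size_rcons; lia.
  + by rewrite -H // size_cat ev /=; lia.
- case: h3 => [h|[v' [ev h]]]; [left|right; exists v'; split=> //].
  + by rewrite H // size_cat size_rcons; lia.
  + by rewrite H // size_cat ev /=; lia.
Qed.

Lemma cut_prof s s' j j' K2 : maxgood s j -> maxgood s' j' ->
  prof (K + K2) s s' -> prof K2 (drop j s) (drop j' s').
Proof.
move=> mj mj' H v hv.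
case: (eqVneq v [::]) => [->|vn]; first by rewrite !sub0seq.
apply/idP/idP => h.
  apply/(cut_char mj' vn); apply/(Phi_prof (prof_le _ H)); first by rewrite leq_add2l.
  exact/(cut_char mj vn).
apply/(cut_char mj vn); apply/(Phi_prof (prof_le _ H)); first by rewrite leq_add2l.
exact/(cut_char mj' vn).
Qed.

End Cut.

Lemma cutR_prof K P s s' k k' K2 :
  maxgood K (rev P) (rev s) k -> maxgood K (rev P) (rev s') k' ->
  prof (K + K2) s s' ->
  prof K2 (take (size s - k) s) (take (size s' - k') s').
Proof.
move=> m1 m2 H; have := cut_prof m1 m2 (prof_rev H).
rewrite !drop_rev => /prof_rev; by rewrite !revK.
Qed.

Definition alph s : {set A} := [set x in s].

Lemma prof_alph K s t : 0 < K -> prof K s t -> alph s = alph t.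
Proof. by move=> K0 H; apply/setP => x; rewrite !inE -!sub1seq; apply: H. Qed.

Lemma prof_mem K s t x : 0 < K -> prof K s t -> (x \in s) = (x \in t).
Proof. by move=> K0 H; rewrite -!sub1seq; apply: H. Qed.

Lemma prof_cons K x p p' : prof K p p' -> prof K (x :: p) (x :: p').
Proof.
move=> H [|y v] hv; first by rewrite !sub0seq.
rewrite /=; case: eqP => _; apply: H => //; exact: ltnW.
Qed.

Lemma subseq_sfx x v T q : x \notin T -> subseq v q = subseq (x :: v) (T ++ x :: q).
Proof.
elim: T => [|y T IH] /=; first by rewrite eqxx.
rewrite inE negb_or => /andP[nxy nT]; rewrite (negbTE nxy); exact: IH.
Qed.

Lemma subseq_pfx x v T p : x \notin T -> subseq v p = subseq (rcons v x) (p ++ x :: T).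
Proof.
move=> nT; rewrite -[RHS]subseq_rev rev_rcons rev_cat rev_cons -cats1 -catA /=.
rewrite -(subseq_rev v); apply: subseq_sfx; by rewrite mem_rev.
Qed.

Lemma split_index x s : x \in s ->
  s = take (index x s) s ++ x :: drop (index x s).+1 s /\ x \notin take (index x s) s.
Proof.
move=> xs; split; last by rewrite in_take // ltnn.
by rewrite -{1}(cat_take_drop (index x s) s) (drop_nth x) ?index_mem // nth_index.
Qed.

Lemma sfx_prof K x s s' : x \in s -> prof K.+1 s s' ->
  prof K (drop (index x s).+1 s) (drop (index x s').+1 s').
Proof.
move=> xs H; have xs' : x \in s' by rewrite -sub1seq -H // sub1seq.
have [E nT] := split_index xs; have [E' nT'] := split_index xs'.
move=> v hv; rewrite (subseq_sfx v _ nT) (subseq_sfx v _ nT') -E -E'; exact: H.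
Qed.

Lemma sfx_prof' K x s s' : x \in s -> prof K.+1 s s' ->
  prof K (drop (index x s) s) (drop (index x s') s').
Proof.
move=> xs H; have xs' : x \in s' by rewrite -sub1seq -H // sub1seq.
rewrite [drop _ s](drop_nth x) ?index_mem // [drop _ s'](drop_nth x) ?index_mem //.
rewrite (nth_index x xs) (nth_index x xs').
by apply: prof_cons; apply: (sfx_prof xs H).
Qed.

Fixpoint arch (n : nat) (B : {set A}) (s : seq A) : Prop :=
  if n is n'.+1 then exists i, B \subset alph (take i s) /\ arch n' B (drop i s)
  else True.

Lemma arch_W n B s : arch n B s -> exists ps : seq (seq A),
  [/\ size ps = n, all (fun p => B \subset alph p) ps,
      all (fun p => size p <= #|A|) ps & subseq (flatten ps) s].
Proof.
elim: n s => [|n IH] s /=; first by move=> _; exists [::]; rewrite sub0seq.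
case=> i [hB /IH [ps [h1 h2 h3 h4]]].
exists (undup (take i s) :: ps); split => /=; first by rewrite h1.
- rewrite h2 andbT; apply: subset_trans hB _; apply/subsetP => x.
  by rewrite !inE mem_undup.
- rewrite h3 andbT; have /card_uniqP <- := undup_uniq (take i s); exact: max_card.
- apply: subseq_join h4; exact: undup_subseq.
Qed.

Lemma W_arch n B s (ps : seq (seq A)) : size ps = n ->
  all (fun p => B \subset alph p) ps -> subseq (flatten ps) s -> arch n B s.
Proof.
elim: ps n s => [|p ps IH] [|n] s //= [hn] /andP[hp hps] /subseq_split [i [h1 h2]].
exists i; split; last exact: IH.
apply: subset_trans hp _; apply/subsetP => x; rewrite !inE; exact: mem_subseq.
Qed.

Lemma arch_sub n B s t : subseq s t -> arch n B s -> arch n B t.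
Proof.
move=> st /arch_W [ps [h1 h2 _ h4]]; apply: (W_arch h1 h2); exact: subseq_trans st.
Qed.

Lemma arch_prof n B s s' : prof (n * #|A|) s s' -> arch n B s -> arch n B s'.
Proof.
move=> H /arch_W [ps [h1 h2 h3 h4]]; apply: (W_arch h1 h2).
rewrite -H //; rewrite size_flatten -h1.
elim: ps h3 {h1 h2 h4} => [|p ps IH] //= /andP[hp hps].
rewrite mulSn; apply: leq_add => //; exact: IH.
Qed.

Lemma arch_mono n n' B s : n' <= n -> arch n B s -> arch n' B s.
Proof.
elim: n' n s => [|n' IH] [|n] s //= le [i [h1 h2]]; exists i; split=> //; exact: IH h2.
Qed.

Lemma arch1 B s : B \subset alph s -> arch 1 B s.
Proof. by move=> h; exists (size s); rewrite take_size. Qed.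

Lemma arch_cat n B s1 s2 : B \subset alph s1 -> arch n B s2 -> arch n.+1 B (s1 ++ s2).
Proof. by move=> h1 h2; exists (size s1); rewrite take_size_cat // drop_size_cat. Qed.

Inductive item := Lt of A | Zn of {set A}.

Section Parse.
Variable m : nat.

Definition zone (B : {set A}) z := [/\ B != set0, all (fun x => x \in B) z & arch m B z].

Fixpoint parse (s : seq A) (S : seq item) : Prop :=
  match S with
  | [::] => s = [::]
  | Lt a :: S' => exists s', s = a :: s' /\ parse s' S'
  | Zn B :: S' => exists z s', [/\ s = z ++ s', zone B z & parse s' S']
  end.

Lemma parse_cat S1 S2 s1 s2 : parse s1 S1 -> parse s2 S2 -> parse (s1 ++ s2) (S1 ++ S2).
Proof.
elim: S1 s1 => [|[a|B] S1 IH] s1 /=; first by move=> ->.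
  by case=> s' [-> h] h2; exists (s' ++ s2); split=> //; exact: IH.
case=> z [s' [-> hz h]] h2; exists z, (s' ++ s2); split=> //; first by rewrite catA.
exact: IH.
Qed.

Definition rgood K s := exists S, forall s', prof K s s' -> parse s' S.

Lemma rgood_le K K' s : K <= K' -> rgood K s -> rgood K' s.
Proof. by move=> le [S HS]; exists S => s' h; apply: HS; apply: prof_le h. Qed.

End Parse.
End Words.


Section Sound.
Variable A : finType.
Variable D : dfa A.
Variable m : nat.
Hypothesis hm : #|state D| <= m.

Fixpoint toP (S : seq (item A)) : seq (seq A) * seq {set A} :=
  match S with
  | [::] => ([:: [::]], [::])
  | Lt a :: S' => let: (us, Bs) := toP S' in
       (if us is u :: us' then (a :: u) :: us' else [:: [:: a]], Bs)
  | Zn B :: S' => let: (us, Bs) := toP S' in ([::] :: us, B :: Bs)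
  end.

Lemma toP_size S : size (toP S).1 = (size (toP S).2).+1.
Proof.
elim: S => [|[a|B] S IH] //=; case: (toP S) IH => [[|u us] Bs] //=; by move=> [->].
Qed.

Lemma run_cat (p : state D) w1 w2 : run p (w1 ++ w2) = run (run p w1) w2.
Proof. by rewrite /run foldl_cat. Qed.

Lemma loop_aux (B : {set A}) (s0 : state D) : forall n z (p : state D) (V : seq (state D)),
  uniq V -> #|state D| <= size V + n ->
  (forall q, q \in V -> path_sub B s0 q /\ path_eq B q p) ->
  path_sub B s0 p -> arch n B z -> all (fun x => x \in B) z ->
  exists q, [/\ path_sub B s0 q, path_eq B q q & path_sub B q (run p z)].
Proof.
elim=> [|n IH] z p V uV hc hV hp ha hz.
  case: (boolP (p \in V)) => pV.
    exists p; split => //; first by case: (hV _ pV).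
    by exists z.
  have : uniq (p :: V) by rewrite /= pV.
  move/card_uniqP => e; have := max_card (mem (p :: V)).
  by rewrite e /= addn0 in hc *; move=> h; have := leq_trans h hc; rewrite ltnn.
case: (boolP (p \in V)) => pV.
  exists p; split => //; first by case: (hV _ pV).
  by exists z.
case: ha => i [hi ha].
have hzi : all (fun x => x \in B) (take i z).
  by apply/allP => x /mem_take xz; move/allP: hz; apply.
have hzB : forall b, b \in B -> b \in take i z.
  by move=> b bB; move/subsetP: hi => /(_ b bB); rewrite inE.
have := IH (drop i z) (run p (take i z)) (p :: V).
rewrite -run_cat cat_take_drop; apply => //.
- by rewrite /= pV.
- by rewrite /= addSnnS.
- move=> q; rewrite inE => /orP[/eqP ->|qV].
    split => //; by exists (take i z).
  have [h1 [w [w1 [w2 w3]]]] := hV _ qV; split => //.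
  exists (w ++ take i z); split; first by rewrite all_cat w1 hzi.
  split; first by move=> b bB; rewrite mem_cat hzB ?orbT.
  by rewrite run_cat w3.
- case: hp => w [w1 w2]; exists (w ++ take i z); split.
  + by rewrite all_cat w1 hzi.
  + by rewrite run_cat w2.
- by apply/allP => x /mem_drop xz; move/allP: hz; apply.
Qed.

Lemma zone_loop (B : {set A}) z (p : state D) : zone m B z ->
  exists q, [/\ path_sub B p q, path_eq B q q & path_sub B q (run p z)].
Proof.
case=> _ hz ha; apply: (@loop_aux B p m z p [::]) => //.
by exists [::].
Qed.

Lemma parse_sound S : forall w (p : state D), parse m w S -> final (run p w) ->
  pattern_path_from p (toP S).1 (toP S).2.
Proof.
elim: S => [|[a|B] S IH] w p /=.
- by move=> -> .
- case=> w' [-> hw] hf.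
  have := IH w' (delta p a) hw hf.
  have := toP_size S; case: (toP S) => [[|u us] Bs] //= _ h; exact: h.
- case=> z [w' [-> hz hw]]; rewrite run_cat => hf.
  have [q [q1 q2 q3]] := zone_loop p hz.
  have := IH w' (run p z) hw hf.
  have := toP_size S; case: (toP S) => [[|u us] Bs] //= _ h.
  by exists p, q, (run p z).
Qed.

Lemma parse_nonempty S w : parse m w S -> all (fun B : {set A} => B != set0) (toP S).2.
Proof.
elim: S w => [|[a|B] S IH] w //=.
- case=> w' [_ /IH]; by case: (toP S).
- case=> z [w' [_ [hB _ _] /IH]]; case: (toP S) => us Bs /= ->; by rewrite hB.
Qed.

End Sound.


Section PT.
Variable A : finType.

Fixpoint words (n : nat) : seq (seq A) :=
  if n is n'.+1 then [::] :: [seq x :: w | x <- enum A, w <- words n'] else [:: [::]].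

Lemma words_mem n v : size v <= n -> v \in words n.
Proof.
elim: n v => [|n IH] [|x v] //= h; rewrite ?inE ?eqxx //=.
apply: (allpairs_f (fun x0 w => x0 :: w)); [by rewrite mem_enum | exact: IH].
Qed.

Lemma pt_build (V : seq (seq A)) (g : seq bool -> bool) :
  exists e, forall w, pt_sem e w = g (map (fun v => subseq v w) V).
Proof.
elim: V g => [|v V IH] g.
  exists (if g [::] then @PTtrue A else PTnot (@PTtrue A)) => w /=; by case: (g [::]).
have [e1 h1] := IH (fun b => g (true :: b)); have [e0 h0] := IH (fun b => g (false :: b)).
exists (PTor (PTand (PTatom v) e1) (PTand (PTnot (PTatom v)) e0)) => w /=.
by rewrite h1 h0; case: subseq => /=; rewrite ?orbF.
Qed.

Lemma sat_PT K (Q : seq A -> Prop) : (forall w w', prof K w w' -> Q w -> Q w') ->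
  exists e, forall w, Q w <-> pt_sem e w.
Proof.
move=> hQ; pose V := words K; pose vec w := map (fun v => subseq v w) V.
pose g b := if excluded_middle_informative (exists w, vec w = b /\ Q w) then true else false.
have [e he] := pt_build V g; exists e => w; rewrite he /g.
case: excluded_middle_informative => [[w0 [h1 h2]]|n].
  split=> // _; apply: hQ h2 => v hv.
  by move/eq_in_map: h1 => /(_ v (words_mem hv)).
split=> // hw; exfalso; apply: n; by exists w.
Qed.

Lemma nonsep_prof (D1 D2 : dfa A) K : ~ PT_separable (lang D1) (lang D2) ->
  exists w1 w2, [/\ lang D1 w1, lang D2 w2 & prof K w1 w2].
Proof.
move=> ns; apply: NNPP => hn; apply: ns.
have hQ : forall w w', prof K w w' -> (exists w1, lang D1 w1 /\ prof K w1 w) ->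
    exists w1, lang D1 w1 /\ prof K w1 w'.
  move=> w w' h [w1 [h1 h2]]; exists w1; split => //; exact: prof_trans h2 h.
have [e he] := sat_PT hQ.
exists (pt_sem e); split; first by exists e.
split.
  move=> w hw; apply/he; by exists w.
move=> w /he [w1 [h1 h2]]; apply/negP => h2w; apply: hn; by exists w1, w.
Qed.

End PT.


Section Helpers.
Variable A : finType.
Implicit Types (s t u v w : seq A) (x y e : A) (B C : {set A}).

Lemma exists_argmax C (f : A -> nat) : C != set0 ->
  exists a, a \in C /\ forall c, c \in C -> f c <= f a.
Proof.
case/set0Pn => c0 c0C; case: (arg_maxnP f c0C) => a ha hmax; by exists a.
Qed.

Lemma alph_sub s t : subseq s t -> alph s \subset alph t.
Proof. move=> st; apply/subsetP => x; rewrite !inE; exact: mem_subseq. Qed.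

Lemma alph_drop_letter s C x : alph s \subset C -> x \in C -> x \notin s -> #|alph s| < #|C|.
Proof.
move=> sC xC xs.
have : alph s \subset C :\ x.
  apply/subsetP => y ys; rewrite !inE; move/subsetP: sC => /(_ y ys) ->.
  rewrite andbT; apply/eqP => E; move: ys; rewrite inE E => ys; by rewrite ys in xs.
move/subset_leq_card; rewrite (cardsD1 x C) xC add1n; exact.
Qed.

Lemma alph_cases X s (t : nat) : alph X \subset alph s -> #|alph s| = t.+1 ->
  #|alph X| <= t \/ alph X = alph s.
Proof.
move=> sub hc; case: (leqP #|alph X| t) => h; [by left | right].
apply/eqP; rewrite eqEcard sub hc //.
Qed.

Lemma maxpre_prof K1 P s j n : maxgood K1 P s j -> n <= size s ->
  prof K1 (take n s) P -> prof K1 (take j s) P /\ n <= j.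
Proof.
case=> js gj mj ns H.
have gn : good K1 P s n by move=> w hw hs; rewrite -H.
have nj := mj _ ns gn; split => // w hw; apply/idP/idP => h; first exact: gj.
rewrite -H // in h; apply: subseq_trans h (subseq_take_le _ nj).
Qed.

Lemma maxsuf_prof K1 P s k n : maxgood K1 (rev P) (rev s) k -> n <= size s ->
  prof K1 (drop n s) P -> prof K1 (drop (size s - k) s) P /\ size s - k <= n.
Proof.
move=> mk ns H.
have H' : prof K1 (take (size s - n) (rev s)) (rev P).
  by rewrite take_rev subKn //; apply: prof_rev.
have hn : size s - n <= size (rev s) by rewrite size_rev leq_subr.
have [h1 h2] := maxpre_prof mk hn H'.
split; last by lia.
by move/prof_rev: h1; rewrite revK rev_take size_rev revK.
Qed.

Lemma maxpre_bound K1 P s j x : maxgood K1 P s j -> 0 < K1 -> x \in s -> x \notin P ->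
  j <= index x s.
Proof.
case=> js gj mj K1p xs xP; rewrite leqNgt; apply/negP => lt.
have : subseq [:: x] (take j s) by rewrite sub1seq in_take.
by move/(gj [:: x] K1p); rewrite sub1seq (negbTE xP).
Qed.

Lemma pfx_prof K x s s' : x \in s -> prof K.+1 s s' ->
  prof K (take (size s - index x (rev s)) s) (take (size s' - index x (rev s')) s').
Proof.
move=> xs H; have := sfx_prof' (x := x) _ (prof_rev H); rewrite mem_rev => /(_ xs).
by rewrite !drop_rev => /prof_rev; rewrite !revK.
Qed.

Lemma take_index_rcons x s : x \in s -> take (index x s).+1 s = rcons (take (index x s) s) x.
Proof. by move=> xs; rewrite (take_nth x) ?index_mem // nth_index. Qed.

Lemma count_take_index x s : x \in s -> count_mem x (take (index x s).+1 s) = 1.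
Proof.
move=> xs; rewrite take_index_rcons // -cats1 count_cat /=.
have [_ nT] := split_index xs; by move/count_memPn: nT => ->; rewrite eqxx.
Qed.

End Helpers.

Section Robust.
Variable A : finType.
Variable m : nat.
Implicit Types (s t u v w : seq A) (x y e : A) (B C : {set A}).

Section Step.
Variables (t K0 : nat).
Hypothesis H0 : forall s, #|alph s| <= t -> rgood m K0 s.

Lemma r1case : exists K, forall s, #|alph s| = t.+1 -> ~ arch 2 (alph s) s -> rgood m K s.
Proof.
pose K1 := K0.+1; exists (K1 + (K1 + K0) + 2) => s hC n2.
set C := alph s.
have Cn : C != set0 by rewrite -card_gt0 hC.
have [a [aC amax]] := exists_argmax (fun c => index c s) Cn.
have [b [bC bmax]] := exists_argmax (fun c => index c (rev s)) Cn.
have as_ : a \in s by move: aC; rewrite inE.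
have bs : b \in s by move: bC; rewrite inE.
set ia := index a s; set jb := index b (rev s).
have jbs : jb < size s by rewrite -(size_rev s) index_mem mem_rev.
have ias : ia < size s by rewrite index_mem.
set lb := size s - jb.+1.
have F2 : forall c, c \in C -> c \in take ia.+1 s.
  move=> c cC; rewrite in_take ?ltnS ?amax //; by rewrite inE in cC.
have F3 : forall c, c \in C -> c \in drop lb s.
  move=> c cC; have cs : c \in rev s by rewrite mem_rev; rewrite inE in cC.
  have : c \in take jb.+1 (rev s) by rewrite in_take // ltnS bmax.
  by rewrite take_rev mem_rev.
have nb : b \notin drop lb.+1 s.
  have -> : lb.+1 = size s - jb by rewrite /lb; lia.
  by rewrite -mem_rev -take_rev in_take ?mem_rev // ltnn.
have lbia : lb <= ia.
  rewrite leqNgt; apply/negP => lt; apply: n2; exists ia.+1; split.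
    apply/subsetP => c cC; rewrite inE; exact: F2.
  apply: arch1; apply/subsetP => c cC; rewrite inE.
  apply: (mem_subseq (subseq_drop_le _ lt)); exact: F3.
have lbs : lb < size s by rewrite /lb; lia.
case: (ltnP lb ia) => [lt|ge].
-
  set A0 := take lb.+1 s.
  have eA : take (size s - jb) s = A0 by rewrite /A0; congr take; rewrite /lb; lia.
  set B0 := drop ia s.
  have nA : a \notin A0.
    have [_ nT] := split_index as_; apply/negP => h; move/negP: nT; apply.
    by rewrite /A0 -(take_takel s lt) in h; apply: mem_take h.
  have nB : b \notin B0.
    apply/negP => h; move/negP: nb; apply; exact: (mem_subseq (subseq_drop_le _ lt)) h.
  have cA : #|alph A0| <= t.
    rewrite -ltnS -hC; apply: alph_drop_letter aC nA; apply: alph_sub; exact: take_subseq.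
  have cB : #|alph B0| <= t.
    rewrite -ltnS -hC; apply: alph_drop_letter bC nB; apply: alph_sub; exact: drop_subseq.
  have [SA HSA] := H0 cA; have [SB HSB] := H0 cB.
  have [j mj] := maxgood_ex K1 A0 s.
  have [hAp hj1] := maxpre_prof mj (n := lb.+1) lbs (@prof_refl _ _ _).
  have hj2 : j <= ia := maxpre_bound mj (ltn0Sn _) as_ nA.
  set tau := drop j s.
  have [k mk] := maxgood_ex K1 (rev B0) (rev tau).
  have eB : drop (ia - j) tau = B0 by rewrite /tau drop_drop subnK.
  have tb : ia - j <= size tau by rewrite /tau size_drop; lia.
  have pB0 : prof K1 (drop (ia - j) tau) B0 by rewrite eB; exact: prof_refl.
  have [hBp hk] := maxsuf_prof mk tb pB0.
  set core := take (size tau - k) tau.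
  have ccore : #|alph core| <= t.
    have sub1 : subseq core (take ia s).
      apply: subseq_trans (subseq_take_le _ hk) _.
      have := takeD j (ia - j) s; rewrite subnKC // => ->; exact: suffix_subseq.
    have [_ nT] := split_index as_.
    have nc : a \notin core by apply/negP => h; move/negP: nT; apply; exact: (mem_subseq sub1) h.
    rewrite -ltnS -hC; apply: alph_drop_letter aC nc; apply: alph_sub.
    apply: subseq_trans sub1 (take_subseq _ _).
  have [Sc HSc] := H0 ccore.
  exists (SA ++ Sc ++ SB) => s' hp.
  have as' : a \in s' by rewrite -sub1seq -hp // sub1seq.
  have bs' : b \in s' by rewrite -sub1seq -hp // sub1seq.
  set ia' := index a s'; set jb' := index b (rev s').
  have pA : prof K1 A0 (take (size s' - jb') s').
    rewrite -eA; apply: pfx_prof bs (prof_le _ hp); rewrite /K1; lia.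
  have pB : prof K1 B0 (drop ia' s').
    apply: sfx_prof' as_ (prof_le _ hp); rewrite /K1; lia.
  have [j' mj'] := maxgood_ex K1 A0 s'.
  have [hAp' _] := maxpre_prof mj' (leq_subr _ _) (prof_sym pA).
  have hj2' : j' <= ia' := maxpre_bound mj' (ltn0Sn _) as' nA.
  set tau' := drop j' s'.
  have [k' mk'] := maxgood_ex K1 (rev B0) (rev tau').
  have ias' : ia' < size s' by rewrite index_mem.
  have tb' : ia' - j' <= size tau' by rewrite /tau' size_drop; lia.
  have pB1 : prof K1 (drop (ia' - j') tau') B0.
    by rewrite /tau' drop_drop subnK //; exact: prof_sym pB.
  have [hBp' _] := maxsuf_prof mk' tb' pB1.
  have ptau : prof (K1 + K0) tau tau'.
    apply: cut_prof mj mj' (prof_le _ hp); lia.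
  have pcore : prof K0 core (take (size tau' - k') tau') := cutR_prof mk mk' ptau.
  rewrite -(cat_take_drop j' s') -/tau' -(cat_take_drop (size tau' - k') tau').
  apply: parse_cat; [|apply: parse_cat].
  + apply: HSA; apply: prof_le (prof_sym hAp'); exact: leqnSn.
  + exact: HSc pcore.
  + apply: HSB; apply: prof_le (prof_sym hBp'); exact: leqnSn.
- (* single occurrence *)
  have E : lb = ia by apply/eqP; rewrite eqn_leq lbia ge.
  have ab : a = b.
    have := nth_index a as_; rewrite -/ia -E (set_nth_default b) // /lb -nth_rev //.
    by rewrite nth_index ?mem_rev.
  have [Es nT] := split_index as_.
  have nT2 : a \notin drop ia.+1 s by rewrite -E ab.
  have c1 : #|alph (take ia s)| <= t.
    rewrite -ltnS -hC; apply: alph_drop_letter aC nT; apply: alph_sub; exact: take_subseq.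
  have c2 : #|alph (drop ia.+1 s)| <= t.
    rewrite -ltnS -hC; apply: alph_drop_letter aC nT2; apply: alph_sub; exact: drop_subseq.
  have [S1 HS1] := H0 c1; have [S2 HS2] := H0 c2.
  exists (S1 ++ Lt a :: S2) => s' hp.
  have as' : a \in s' by rewrite -sub1seq -hp // sub1seq.
  have hsz : size [:: a; a] <= K1 + (K1 + K0) + 2 by rewrite /K1 /=; lia.
  have aa : ~~ subseq [:: a; a] s'.
    rewrite -(hp _ hsz); apply/negP => haa.
    have [i [h1 h2]] := @subseq_split _ [:: a] [:: a] s haa.
    rewrite !sub1seq in h1 h2; rewrite in_take // in h1.
    by move/negP: nT2; apply; exact: (mem_subseq (subseq_drop_le _ h1)) h2.
  have [Es' nT'] := split_index as'.
  have nT2' : a \notin drop (index a s').+1 s'.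
    apply/negP => h; move/negP: aa; apply.
    apply: (@subseq_join _ [:: a] [:: a] _ (index a s').+1); rewrite sub1seq //.
    by rewrite in_take.
  rewrite Es'; apply: parse_cat.
    apply: HS1 => v hv; rewrite (subseq_pfx v _ nT2) (subseq_pfx v _ nT2') -Es -Es'.
    apply: hp; rewrite size_rcons; lia.
  exists (drop (index a s').+1 s'); split => //; apply: HS2.
  apply: sfx_prof as_ (prof_le _ hp); lia.
Qed.

Lemma r2case r Kr : 2 <= r ->
  (forall s, #|alph s| <= t.+1 -> ~ arch r (alph s) s -> rgood m Kr s) ->
  exists K, forall s, #|alph s| = t.+1 -> ~ arch r.+1 (alph s) s -> rgood m K s.
Proof.
move=> r2 Hr.
pose K2 := maxn K0 Kr; pose K1 := (maxn K2 (r * #|A|)).+1.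
have K21 : K2 <= K1 by rewrite /K1 leqW // leq_maxl.
have Kr1 : r * #|A| <= K1 by rewrite /K1 leqW // leq_maxr.
exists (K1 + K2 + 1) => s hC nr.
set C := alph s.
have Cn : C != set0 by rewrite -card_gt0 hC.
have [a [aC amax]] := exists_argmax (fun c => index c s) Cn.
have as_ : a \in s by move: aC; rewrite inE.
set ia := index a s.
have ias : ia < size s by rewrite index_mem.
have F2 : forall c, c \in C -> c \in take ia.+1 s.
  move=> c cC; rewrite in_take ?ltnS ?amax //; by rewrite inE in cC.
set seg := drop ia.+1 s.
have [k mk] := maxgood_ex K1 (rev seg) (rev s).
have [hY hk] := maxsuf_prof mk ias (@prof_refl _ _ _).
set Y := drop (size s - k) s; set X := take (size s - k) s.
have subX : subseq X (take ia.+1 s) := subseq_take_le _ hk.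
have gX : rgood m K2 X.
  have := alph_cases (alph_sub (subseq_trans subX (take_subseq _ _))) hC.
  case=> [h|h]; first by apply: rgood_le (H0 h); exact: leq_maxl.
  apply: rgood_le (Hr _ _ _); first exact: leq_maxr.
    by rewrite h hC.
  rewrite h => aX; have a2 : arch 2 C X := arch_mono r2 aX.
  case: (arch_W a2) => ps [h1 h2 _ h4].
  move: h1 h2 h4; case: ps => [|p1 [|p2 [|? ?]]] //= _ /and3P[hp1 hp2 _] h4.
  have ap1 : a \in p1 by move/subsetP: hp1 => /(_ a aC); rewrite inE.
  have ap2 : a \in p2 by move/subsetP: hp2 => /(_ a aC); rewrite inE.
  have : subseq [:: a; a] (take ia.+1 s).
    apply: subseq_trans _ (subseq_trans h4 subX).
    rewrite ?cats0 -[[:: a; a]]/([:: a] ++ [:: a]); apply: cat_subseq; by rewrite sub1seq.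
  move/(leq_count_subseq (pred1 a)); rewrite count_take_index // /=; by rewrite eqxx.
have aYseg : alph Y = alph seg := prof_alph (ltn0Sn _) hY.
have gY : rgood m K2 Y.
  have := alph_cases (alph_sub (drop_subseq s ia.+1)) hC.
  case=> [h|h].
    by apply: rgood_le (H0 _); [exact: leq_maxl | rewrite aYseg].
  apply: rgood_le (Hr _ _ _); first exact: leq_maxr.
    by rewrite aYseg h hC.
  rewrite aYseg h => aY; apply: nr.
  have aseg : arch r C seg := arch_prof (prof_le Kr1 hY) aY.
  have hc : C \subset alph (take ia.+1 s).
    by apply/subsetP => c cC; rewrite inE; apply: F2.
  by have := arch_cat hc aseg; rewrite /seg cat_take_drop.
have [SX HSX] := gX; have [SY HSY] := gY.
exists (SX ++ SY) => s' hp.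
have as' : a \in s' by rewrite -sub1seq -hp // sub1seq.
have pseg : prof K1 seg (drop (index a s').+1 s').
  by apply: sfx_prof as_ (prof_le _ hp); lia.
have [k' mk'] := maxgood_ex K1 (rev seg) (rev s').
have ias' : (index a s').+1 <= size s' by rewrite index_mem.
have [hY' _] := maxsuf_prof mk' ias' (prof_sym pseg).
have pX : prof K2 X (take (size s' - k') s').
  apply: cutR_prof mk mk' (prof_le _ hp); lia.
rewrite -(cat_take_drop (size s' - k') s'); apply: parse_cat.
  exact: HSX pX.
apply: HSY; apply: prof_le K21 _; exact: prof_trans hY (prof_sym hY').
Qed.

End Step.

Lemma robust_all (n : nat) : exists K, forall s, #|alph s| <= n -> rgood m K s.
Proof.
elim: n => [|t [K0 H0]].
  exists 1 => s hs.
  have -> : s = [::].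
    case: s hs => // x s; rewrite leqn0 => /eqP /cards0_eq E.
    have : x \in alph (x :: s) by rewrite inE mem_head.
    by rewrite E inE.
  exists [::] => s' hp /=; case: s' hp => // x s' hp.
  by have := hp [:: x] (leqnn 1); rewrite /= eqxx sub0seq.
have [K2 HK2] := r1case H0.
have Pr : forall r, exists K, forall s, #|alph s| <= t.+1 ->
    ~ arch r.+2 (alph s) s -> rgood m K s.
  elim=> [|r [Kr Hr]].
    exists (maxn K2 K0) => s hs n2.
    case: (ltnP #|alph s| t.+1) => h.
      by apply: (rgood_le _ (H0 _ h)); exact: leq_maxr.
    apply: (rgood_le _ (HK2 s _ n2)); first exact: leq_maxl.
    by apply/eqP; rewrite eqn_leq hs h.
  have [K HK] := @r2case t K0 H0 r.+2 Kr erefl Hr.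
  exists (maxn K K0) => s hs n.
  case: (ltnP #|alph s| t.+1) => h.
    by apply: (rgood_le _ (H0 _ h)); exact: leq_maxr.
  apply: (rgood_le _ (HK s _ n)); first exact: leq_maxl.
  by apply/eqP; rewrite eqn_leq hs h.
have [Km HKm] := Pr m.
exists (maxn (maxn Km K0) (m * #|A|).+1) => s hs.
case: (ltnP #|alph s| t.+1) => h.
  apply: (rgood_le _ (H0 _ h)); by rewrite leq_max leq_maxr.
have hC : #|alph s| = t.+1 by apply/eqP; rewrite eqn_leq hs h.
case: (classic (arch m (alph s) s)) => am.
  exists [:: Zn (alph s)] => s' hp.
  have hp1 : prof (m * #|A|) s s'.
    apply: prof_le hp; apply: leq_trans (leqnSn _) (leq_maxr _ _).
  have ea : alph s = alph s' := prof_alph (leq_trans (ltn0Sn _) (leq_maxr _ _)) hp.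
  exists s', [::]; split; [by rewrite cats0 | | by []].
  split; first by rewrite -card_gt0 hC.
    by apply/allP => x xs'; rewrite ea inE.
  exact: arch_prof hp1 am.
apply: (rgood_le _ (HKm s hs _)); first by rewrite leq_max leq_maxl.
by move=> a2; apply: am; apply: arch_mono a2; exact: leqW (leqW (leqnn _)).
Qed.

End Robust.


Theorem lemma5 (A : finType) (D1 D2 : dfa A) :
  ~ PT_separable (lang D1) (lang D2) ->
  exists (us : seq (seq A)) (Bs : seq {set A}),
    factorization_pattern us Bs /\
    admits_pattern_path D1 us Bs /\ admits_pattern_path D2 us Bs.
Proof.
move=> ns.
pose m := maxn #|state D1| #|state D2|.
have [K HK] := robust_all A m #|A|.
have [w1 [w2 [h1 h2 hp]]] := nonsep_prof K ns.
have [S HS] := HK w1 (max_card _).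
have p1 := HS w1 (@prof_refl _ _ _).
have p2 := HS w2 hp.
exists (toP S).1, (toP S).2; split; [split|split].
- exact: toP_size.
- exact: parse_nonempty p1.
- exact: (@parse_sound A D1 m (leq_maxl _ _) S w1 (init D1) p1 h1).
- exact: (@parse_sound A D2 m (leq_maxr _ _) S w2 (init D2) p2 h2).
Qed.
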